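(* Let $\mathcal{M}$ be a model category in which every object is fibrant, and let $F\colon\mathbb{G}\to\mathcal{M}$ be a cofibrant and weakly contractible functor. Then the globular extension $(\mathcal{M},F)$ is contractible.
   Context: The globe category $\mathbb{G}$ has objects $D_n$ ($n\ge0$), generated by $\sigma_n,\tau_n\colon D_{n-1}\to D_n$ ($n\ge1$) with $\sigma_{n+1}\sigma_n=\tau_{n+1}\sigma_n$, $\sigma_{n+1}\tau_n=\tau_{n+1}\tau_n$; $\sigma^i_j=\sigma_i\cdots\sigma_{j+1}$, $\tau^i_j=\tau_i\cdots\tau_{j+1}$. A table of dimensions: integers $i_1,\dots,i_n,i'_1,\dots,i'_{n-1}\ge0$ with $i_k>i'_k<i_{k+1}$; its dimension is its largest entry. For a functor $\mathbb{G}\to\mathcal{M}$ (images denoted as in $\mathbb{G}$), the globular sum of the table is the colimit of $D_{i_1}\xleftarrow{\sigma^{i_1}_{i'_1}}D_{i'_1}\xrightarrow{\tau^{i_2}_{i'_1}}D_{i_2}\leftarrow\cdots\xrightarrow{\tau^{i_n}_{i'_{n-1}}}D_{i_n}$ (it exists since $\mathcal{M}$ is cocomplete, so $(\mathcal{M},F)$ is a globular extension). Two morphisms $f,g\colon D_n\to X$ are globularly parallel if $n=0$ or $f\sigma_n=g\sigma_n$, $f\tau_n=g\tau_n$; a lifting of $(f,g)$ is $h\colon D_{n+1}\to X$ with $h\sigma_{n+1}=f$, $h\tau_{n+1}=g$; $(f,g)\colon D_n\to S$ is admissible if $f,g$ are globularly parallel and $S$ is a globular sum of dimension at most $n+1$;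 the globular extension is contractible if every admissible pair has a lifting. For $F\colon\mathbb{G}\to\mathcal{M}$, set $S^{-1}=\varnothing$, $i_0\colon\varnothing\to D_0$, and for $n\ge1$, $S^{n-1}=D_{n-1}\amalg_{S^{n-2}}D_{n-1}$ (pushout of $i_{n-1}$ along itself) and $i_n=(\tau_n,\sigma_n)\colon S^{n-1}\to D_n$. $F$ is cofibrant if every $i_n$ is a cofibration, and weakly contractible if every $D_n\to\ast$ is a weak equivalence. *)

(* Defs.v *)
From mathcomp Require Import ssreflect ssrfun ssrbool eqtype ssrnat seq fintype.

Set Implicit Arguments.
Unset Strict Implicit.
Unset Printing Implicit Defensive.

(* Categories (morphism equality is Leibniz equality).                 *)
Record Category := {
  ob :> Type;
  hom : ob -> ob -> Type;
  idm : forall X, hom X X;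
  comp : forall X Y Z, hom Y Z -> hom X Y -> hom X Z;   (* comp g f = g o f *)
  comp_idl : forall X Y (f : hom X Y), comp (idm Y) f = f;
  comp_idr : forall X Y (f : hom X Y), comp f (idm X) = f;
  comp_assoc : forall X Y Z W (f : hom X Y) (g : hom Y Z) (h : hom Z W),
      comp h (comp g f) = comp (comp h g) f
}.
Arguments hom {c}.
Arguments idm {c}.
Arguments comp {c X Y Z}.

Section CatDefs.
Variable C : Category.

Definition is_initial (I : C) : Prop :=
  forall X : C, exists f : hom I X, forall g : hom I X, g = f.

Definition is_terminal (T : C) : Prop :=
  forall X : C, exists f : hom X T, forall g : hom X T, g = f.

Definition is_pushout (A B D P : C) (f : hom A B) (g : hom A D)
    (u1 : hom B P) (u2 : hom D P) : Prop :=
  comp u1 f = comp u2 g /\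
  forall (X : C) (x1 : hom B X) (x2 : hom D X), comp x1 f = comp x2 g ->
    exists k : hom P X, (comp k u1 = x1 /\ comp k u2 = x2) /\
      forall k' : hom P X, comp k' u1 = x1 -> comp k' u2 = x2 -> k' = k.

Definition is_pullback (A B D P : C) (f : hom B A) (g : hom D A)
    (p1 : hom P B) (p2 : hom P D) : Prop :=
  comp f p1 = comp g p2 /\
  forall (X : C) (x1 : hom X B) (x2 : hom X D), comp f x1 = comp g x2 ->
    exists k : hom X P, (comp p1 k = x1 /\ comp p2 k = x2) /\
      forall k' : hom X P, comp p1 k' = x1 -> comp p2 k' = x2 -> k' = k.

Definition has_finite_colimits : Prop :=
  (exists I : C, is_initial I) /\
  forall (A B D : C) (f : hom A B) (g : hom A D),
    exists (P : C) (u1 : hom B P) (u2 : hom D P), is_pushout f g u1 u2.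

Definition has_finite_limits : Prop :=
  (exists T : C, is_terminal T) /\
  forall (A B D : C) (f : hom B A) (g : hom D A),
    exists (P : C) (p1 : hom P B) (p2 : hom P D), is_pullback f g p1 p2.

Definition morph_class := forall X Y : C, hom X Y -> Prop.

(* f : A -> B is a retract of g : X -> Y *)
Definition is_retract (A B X Y : C) (f : hom A B) (g : hom X Y) : Prop :=
  exists (i : hom A X) (r : hom X A) (j : hom B Y) (s : hom Y B),
    comp r i = idm A /\ comp s j = idm B /\
    comp g i = comp j f /\ comp f r = comp s g.

Definition closed_under_retracts (K : morph_class) : Prop :=
  forall (A B X Y : C) (f : hom A B) (g : hom X Y),
    is_retract f g -> K X Y g -> K A B f.

Definition llp (A B X Y : C) (i : hom A B) (p : hom X Y) : Prop :=
  forall (u : hom A X) (v : hom B Y), comp p u = comp v i ->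
    exists h : hom B X, comp h i = u /\ comp p h = v.

End CatDefs.

(* Model categories (Quillen / Dwyer-Spalinski axioms MC1-MC5).        *)
Record ModelCategory := {
  mcat :> Category;
  weq : morph_class mcat;
  cof : morph_class mcat;
  fib : morph_class mcat;
  mc_colim : has_finite_colimits mcat;
  mc_lim : has_finite_limits mcat;
  mc_2of3_comp : forall (X Y Z : mcat) (f : hom X Y) (g : hom Y Z),
      weq f -> weq g -> weq (comp g f);
  mc_2of3_left : forall (X Y Z : mcat) (f : hom X Y) (g : hom Y Z),
      weq (comp g f) -> weq g -> weq f;
  mc_2of3_right : forall (X Y Z : mcat) (f : hom X Y) (g : hom Y Z),
      weq (comp g f) -> weq f -> weq g;
  mc_retract_weq : closed_under_retracts weq;
  mc_retract_cof : closed_under_retracts cof;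
  mc_retract_fib : closed_under_retracts fib;
  mc_lift_acyclic_cof : forall (A B X Y : mcat) (i : hom A B) (p : hom X Y),
      cof i -> weq i -> fib p -> llp i p;
  mc_lift_acyclic_fib : forall (A B X Y : mcat) (i : hom A B) (p : hom X Y),
      cof i -> fib p -> weq p -> llp i p;
  mc_fact_acyclic_cof : forall (X Y : mcat) (f : hom X Y),
      exists (Z : mcat) (i : hom X Z) (p : hom Z Y),
        cof i /\ weq i /\ fib p /\ comp p i = f;
  mc_fact_acyclic_fib : forall (X Y : mcat) (f : hom X Y),
      exists (Z : mcat) (i : hom X Z) (p : hom Z Y),
        cof i /\ fib p /\ weq p /\ comp p i = f
}.
Arguments weq {m X Y}.
Arguments cof {m X Y}.
Arguments fib {m X Y}.

Definition all_objects_fibrant (M : ModelCategory) : Prop :=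
  forall (X T : M), is_terminal T -> forall u : hom X T, fib u.

(* Functors from the globe category G.  G is presented by generators   *)
(* sigma_n, tau_n : D_{n-1} -> D_n (n >= 1) and the globular relations, *)
(* so a functor G -> C is exactly the following data.                  *)
(* Indexing: gsig n, gtau n : D n -> D (n+1) are sigma_{n+1}, tau_{n+1}. *)
Record GlobeFunctor (C : Category) := {
  Dob : nat -> C;
  gsig : forall n, hom (Dob n) (Dob n.+1);
  gtau : forall n, hom (Dob n) (Dob n.+1);
  glob_ss : forall n, comp (gsig n.+1) (gsig n) = comp (gtau n.+1) (gsig n);
  glob_st : forall n, comp (gsig n.+1) (gtau n) = comp (gtau n.+1) (gtau n)
}.

Section Globular.
Variables (C : Category) (F : GlobeFunctor C).
Local Notation D := (Dob F).

Local Unset Implicit Arguments.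
Inductive is_sigma (j : nat) : forall i, hom (D j) (D i) -> Prop :=
| is_sigma_id : is_sigma j j (idm (D j))
| is_sigma_step : forall i f, is_sigma j i f -> is_sigma j i.+1 (comp (gsig F i) f).

Inductive is_tau (j : nat) : forall i, hom (D j) (D i) -> Prop :=
| is_tau_id : is_tau j j (idm (D j))
| is_tau_step : forall i f, is_tau j i f -> is_tau j i.+1 (comp (gtau F i) f).
Local Set Implicit Arguments.
Arguments is_sigma {j i}.
Arguments is_tau {j i}.

(* A table of dimensions with n+1 entries i_0..i_n and n entries i'_0..i'_{n-1}
   (0-indexed), with i_k > i'_k < i_{k+1}. *)
Record table := {
  tlen : nat;
  ti : 'I_tlen.+1 -> nat;
  ti' : 'I_tlen -> nat;
  tab_left : forall k : 'I_tlen, ti' k < ti (widen_ord (leqnSn tlen) k);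
  tab_right : forall k : 'I_tlen, ti' k < ti (lift ord0 k)
}.

(* dimension (= largest entry) at most m; since i'_k < i_k it suffices
   to bound the i_k, but we bound all entries literally. *)
Definition table_dim_le (T : table) (m : nat) : Prop :=
  (forall k : 'I_(tlen T).+1, ti k <= m) /\ (forall k : 'I_(tlen T), ti' k <= m).

(* cocone on the zigzag D_{i_0} <- D_{i'_0} -> D_{i_1} <- ... -> D_{i_n} *)
Definition zigzag_cocone (T : table) (X : C)
    (c : forall k : 'I_(tlen T).+1, hom (D (ti k)) X) : Prop :=
  forall (k : 'I_(tlen T)) (s : hom (D (ti' k)) (D (ti (widen_ord (leqnSn _) k))))
         (t : hom (D (ti' k)) (D (ti (lift ord0 k)))),
    is_sigma s -> is_tau t ->
    comp (c (widen_ord (leqnSn _) k)) s = comp (c (lift ord0 k)) t.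

Definition is_globular_sum (T : table) (S : C)
    (c : forall k : 'I_(tlen T).+1, hom (D (ti k)) S) : Prop :=
  zigzag_cocone c /\
  forall (X : C) (d : forall k : 'I_(tlen T).+1, hom (D (ti k)) X),
    zigzag_cocone d ->
    exists u : hom S X, (forall k, comp u (c k) = d k) /\
      forall u' : hom S X, (forall k, comp u' (c k) = d k) -> u' = u.

Definition globular_sum_dim_le (S : C) (m : nat) : Prop :=
  exists (T : table) (c : forall k : 'I_(tlen T).+1, hom (D (ti k)) S),
    is_globular_sum c /\ table_dim_le T m.

Definition glob_parallel (X : C) (n : nat) : hom (D n) X -> hom (D n) X -> Prop :=
  match n return hom (D n) X -> hom (D n) X -> Prop with
  | 0 => fun _ _ => True
  | m.+1 => fun f g => comp f (gsig F m) = comp g (gsig F m) /\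
                       comp f (gtau F m) = comp g (gtau F m)
  end.

Definition is_lifting (X : C) (n : nat) (f g : hom (D n) X) (h : hom (D n.+1) X) : Prop :=
  comp h (gsig F n) = f /\ comp h (gtau F n) = g.

Definition admissible (S : C) (n : nat) (f g : hom (D n) S) : Prop :=
  glob_parallel f g /\ globular_sum_dim_le S n.+1.

Definition contractible_ext : Prop :=
  forall (n : nat) (S : C) (f g : hom (D n) S),
    admissible f g -> exists h : hom (D n.+1) S, is_lifting f g h.

(* boundary B n X i : X is a choice of S^{n-1} and i : S^{n-1} -> D_n is i_n.
   S^{-1} is initial; S^{n} = D_n amalg_{S^{n-1}} D_n (pushout of i_n along
   itself, first injection u1, second u2), and i_{n+1} = (tau_{n+1}, sigma_{n+1}). *)
Local Unset Implicit Arguments.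
Inductive boundary : forall n : nat, forall X : C, hom X (D n) -> Prop :=
| boundary0 : forall (X : C) (i : hom X (D 0)), is_initial X -> boundary 0 X i
| boundaryS : forall n (Y : C) (i : hom Y (D n)) (X : C)
                 (u1 u2 : hom (D n) X) (j : hom X (D n.+1)),
    boundary n Y i -> is_pushout i i u1 u2 ->
    comp j u1 = gtau F n -> comp j u2 = gsig F n ->
    boundary n.+1 X j.
Local Set Implicit Arguments.
Arguments boundary {n X}.

End Globular.

Definition cofibrant_globe (M : ModelCategory) (F : GlobeFunctor M) : Prop :=
  forall (n : nat) (X : M) (i : hom X (Dob F n)), @boundary M F n X i -> cof i.

Definition weakly_contractible_globe (M : ModelCategory) (F : GlobeFunctor M) : Prop :=
  forall (n : nat) (T : M), is_terminal T -> forall u : hom (Dob F n) T, weq u.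

(* Main.v *)
Require Import Defs.
From mathcomp Require Import ssreflect ssrfun ssrbool eqtype ssrnat seq fintype.
From Stdlib Require Import Eqdep_dec ClassicalEpsilon.
Require Import Defs.
Set Implicit Arguments. Unset Strict Implicit. Unset Printing Implicit Defensive.

Lemma llp_cof (M : ModelCategory) (A B : M) (i : hom A B) :
  (forall (X Y : M) (p : hom X Y), fib p -> weq p -> llp i p) -> cof i.
Proof.
move=> H.
have [Z [j [p [cj [fp [wp e]]]]]] := mc_fact_acyclic_fib i.
have [h [h1 h2]] : exists h, comp h i = j /\ comp p h = idm B.
  apply: (H _ _ p fp wp j (idm B)). by rewrite e comp_idl.
apply: (@mc_retract_cof M _ _ _ _ i j) cj.
exists (idm A), (idm A), h, p. rewrite !comp_idl !comp_idr h1 h2 e. by [].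
Qed.

Lemma llp_acof (M : ModelCategory) (A B : M) (i : hom A B) :
  (forall (X Y : M) (p : hom X Y), fib p -> llp i p) -> cof i /\ weq i.
Proof.
move=> H.
have [Z [j [p [cj [wj [fp e]]]]]] := mc_fact_acyclic_cof i.
have [h [h1 h2]] : exists h, comp h i = j /\ comp p h = idm B.
  apply: (H _ _ p fp j (idm B)). by rewrite e comp_idl.
have R : is_retract i j.
  exists (idm A), (idm A), h, p. rewrite !comp_idl !comp_idr h1 h2 e. by [].
split; [exact: (mc_retract_cof R cj) | exact: (mc_retract_weq R wj)].
Qed.

Lemma po_sym (C : Category) (A B D P : C) (f : hom A B) (g : hom A D)
  (u1 : hom B P) (u2 : hom D P) : is_pushout f g u1 u2 -> is_pushout g f u2 u1.
Proof.
move=> [com up]; split; first by rewrite com.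
move=> X x1 x2 e. have [k [[k1 k2] ku]] := up X x2 x1 (esym e).
exists k; split; first by split.
by move=> k' h1 h2; apply: ku.
Qed.

Lemma po_llp (C : Category) (A B D P : C) (f : hom A B) (g : hom A D)
  (u1 : hom B P) (u2 : hom D P) (X Y : C) (p : hom X Y) :
  is_pushout f g u1 u2 -> llp f p -> llp u2 p.
Proof.
move=> [com up] Hf u v e.
have [l [l1 l2]] : exists l, comp l f = comp u g /\ comp p l = comp v u1.
  apply: Hf. by rewrite comp_assoc e -!comp_assoc com.
have [h [[h1 h2] _]] := up X l u l1.
exists h; split => //.
have ee : comp (comp v u1) f = comp (comp v u2) g by rewrite -!comp_assoc com.
have [k [_ ku]] := up Y (comp v u1) (comp v u2) ee.
have -> : comp p h = k.
  apply: ku; [by rewrite -comp_assoc h1 | by rewrite -comp_assoc h2 e].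
symmetry; exact: ku.
Qed.

Lemma llp_comp (C : Category) (A B E X Y : C) (i1 : hom A B) (i2 : hom B E)
  (p : hom X Y) : llp i1 p -> llp i2 p -> llp (comp i2 i1) p.
Proof.
move=> H1 H2 u v e.
have ee : comp p u = comp (comp v i2) i1 by rewrite e comp_assoc.
have [l [l1 l2]] := H1 u (comp v i2) ee.
have [h [h1 h2]] := H2 l v l2.
exists h; split => //. by rewrite comp_assoc h1.
Qed.

Lemma llp_id (C : Category) (A X Y : C) (p : hom X Y) : llp (idm A) p.
Proof. move=> u v e; exists u; split; [exact: comp_idr | by rewrite e comp_idr]. Qed.

Lemma par_tau_sig (C : Category) (F : GlobeFunctor C) n :
  glob_parallel (gtau F n) (gsig F n).
Proof. case: n => //= m; split; [by rewrite glob_ss | by rewrite glob_st]. Qed.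

Lemma boundary_ex (M : ModelCategory) (F : GlobeFunctor M) n :
  exists (Y : M) (i : hom Y (Dob F n)), @boundary M F n Y i /\
    forall (Z : M) (a b : hom (Dob F n) Z), glob_parallel a b -> comp a i = comp b i.
Proof.
elim: n => [|n [Y [i [Hb Hp]]]].
  have [[I HI] _] := mc_colim M.
  have [f _] := HI (Dob F 0).
  exists I, f; split; first by constructor.
  move=> Z a b _. have [k Hk] := HI Z. by rewrite (Hk (comp a f)) (Hk (comp b f)).
have [_ PO] := mc_colim M.
have [P [u1 [u2 [com up]]]] := PO _ _ _ i i.
have Hti : comp (gtau F n) i = comp (gsig F n) i by apply: Hp; apply: par_tau_sig.
have [j [[j1 j2] _]] := up _ (gtau F n) (gsig F n) Hti.
exists P, j; split.
  exact: (@boundaryS M F n Y i P u1 u2 j Hb (conj com up) j1 j2).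
move=> Z a b /= [es et].
have ee : comp (comp a (gtau F n)) i = comp (comp a (gsig F n)) i by rewrite -!comp_assoc Hti.
have [k [_ uk]] := up Z (comp a (gtau F n)) (comp a (gsig F n)) ee.
rewrite (uk (comp a j)); [|by rewrite -comp_assoc j1|by rewrite -comp_assoc j2].
symmetry; apply: uk; [by rewrite -comp_assoc j1 et|by rewrite -comp_assoc j2 es].
Qed.

Lemma boundary_step (M : ModelCategory) (F : GlobeFunctor M) n (Y : M) (i : hom Y (Dob F n)) :
  (forall (Z : M) (a b : hom (Dob F n) Z), glob_parallel a b -> comp a i = comp b i) ->
  exists (P : M) (u1 u2 : hom (Dob F n) P) (j : hom P (Dob F n.+1)),
    is_pushout i i u1 u2 /\ comp j u1 = gtau F n /\ comp j u2 = gsig F n.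
Proof.
move=> Hp.
have [_ PO] := mc_colim M.
have [P [u1 [u2 [com up]]]] := PO _ _ _ i i.
have Hti : comp (gtau F n) i = comp (gsig F n) i by apply: Hp; apply: par_tau_sig.
have [j [[j1 j2] _]] := up _ (gtau F n) (gsig F n) Hti.
by exists P, u1, u2, j.
Qed.

Lemma gtau_llp (M : ModelCategory) (F : GlobeFunctor M) n :
  cofibrant_globe F -> weakly_contractible_globe F ->
  forall (X Y : M) (p : hom X Y), fib p -> llp (gtau F n) p.
Proof.
move=> cofF wcF X Y p fp.
have cg : cof (gtau F n).
  apply: llp_cof => X' Y' q fq wq.
  have [Y0 [i [Hb Hp]]] := boundary_ex F n.
  have [P [u1 [u2 [j [po [j1 j2]]]]]] := boundary_step Hp.
  have cj : cof j := cofF _ _ _ (@boundaryS M F n Y0 i P u1 u2 j Hb po j1 j2).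
  have ci : cof i := cofF _ _ _ Hb.
  rewrite -j1. apply: llp_comp; last exact: mc_lift_acyclic_fib.
  apply: (po_llp (po_sym po)). exact: mc_lift_acyclic_fib.
have wg : weq (gtau F n).
  have [[T HT] _] := mc_lim M.
  have [t1 _] := HT (Dob F n.+1).
  have [t0 Ht0] := HT (Dob F n).
  apply: (@mc_2of3_left M _ _ _ (gtau F n) t1); last exact: wcF HT _.
  rewrite (Ht0 (comp t1 (gtau F n))). exact: wcF HT _.
exact: mc_lift_acyclic_cof.
Qed.

Lemma tau_llp (M : ModelCategory) (F : GlobeFunctor M) j i (t : hom (Dob F j) (Dob F i)) :
  cofibrant_globe F -> weakly_contractible_globe F -> is_tau M F j i t ->
  forall (X Y : M) (p : hom X Y), fib p -> llp t p.
Proof.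
move=> cofF wcF H X Y p fp; elim: H => [|i' f _ IH]; first exact: llp_id.
apply: llp_comp => //. exact: gtau_llp.
Qed.

Lemma sig_le (C : Category) (F : GlobeFunctor C) j i f : is_sigma C F j i f -> j <= i.
Proof. by elim=> // i' f' _ IH; apply: leqW. Qed.

Lemma sig_ex (C : Category) (F : GlobeFunctor C) j i : j <= i -> exists f, is_sigma C F j i f.
Proof.
elim: i => [|i IH].
  rewrite leqn0 => /eqP ->. exists (idm _); constructor.
rewrite leq_eqVlt => /orP [/eqP ->|H]; first by exists (idm _); constructor.
have [f Hf] := IH H. exists (comp (gsig F i) f); by constructor.
Qed.

Lemma sig_inv (C : Category) (F : GlobeFunctor C) j i f : is_sigma C F j i f ->
  existT (fun k => hom (Dob F j) (Dob F k)) i f = existT _ j (idm _) \/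
  exists i' f', is_sigma C F j i' f' /\
    existT (fun k => hom (Dob F j) (Dob F k)) i f = existT _ i'.+1 (comp (gsig F i') f').
Proof. by case=> [|i' f' H]; [left | right; exists i', f']. Qed.

Lemma sig_uniq (C : Category) (F : GlobeFunctor C) j i f g :
  is_sigma C F j i f -> is_sigma C F j i g -> f = g.
Proof.
move=> H; elim: H g => [|i0 f0 Hf IH] g Hg.
  case: (sig_inv Hg) => [E | [i' [f' [Hf' E]]]].
    by rewrite (inj_pair2_eq_dec _ PeanoNat.Nat.eq_dec _ _ _ _ E).
  have /= ej := f_equal (@projT1 _ _) E.
  exfalso; have := sig_le Hf'; rewrite ej ltnn; done.
case: (sig_inv Hg) => [E | [i' [f' [Hf' E]]]].
  have /= ej := f_equal (@projT1 _ _) E.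
  exfalso; have := sig_le Hf; rewrite -ej ltnn; done.
have /= ej := f_equal (@projT1 _ _) E.
case: ej => ei; subst i'.
by rewrite (inj_pair2_eq_dec _ PeanoNat.Nat.eq_dec _ _ _ _ E) (IH f' Hf').
Qed.

Lemma tau_le (C : Category) (F : GlobeFunctor C) j i f : is_tau C F j i f -> j <= i.
Proof. by elim=> // i' f' _ IH; apply: leqW. Qed.

Lemma tau_ex (C : Category) (F : GlobeFunctor C) j i : j <= i -> exists f, is_tau C F j i f.
Proof.
elim: i => [|i IH].
  rewrite leqn0 => /eqP ->. exists (idm _); constructor.
rewrite leq_eqVlt => /orP [/eqP ->|H]; first by exists (idm _); constructor.
have [f Hf] := IH H. exists (comp (gtau F i) f); by constructor.
Qed.

Lemma tau_inv (C : Category) (F : GlobeFunctor C) j i f : is_tau C F j i f ->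
  existT (fun k => hom (Dob F j) (Dob F k)) i f = existT _ j (idm _) \/
  exists i' f', is_tau C F j i' f' /\
    existT (fun k => hom (Dob F j) (Dob F k)) i f = existT _ i'.+1 (comp (gtau F i') f').
Proof. by case=> [|i' f' H]; [left | right; exists i', f']. Qed.

Lemma tau_uniq (C : Category) (F : GlobeFunctor C) j i f g :
  is_tau C F j i f -> is_tau C F j i g -> f = g.
Proof.
move=> H; elim: H g => [|i0 f0 Hf IH] g Hg.
  case: (tau_inv Hg) => [E | [i' [f' [Hf' E]]]].
    by rewrite (inj_pair2_eq_dec _ PeanoNat.Nat.eq_dec _ _ _ _ E).
  have /= ej := f_equal (@projT1 _ _) E.
  exfalso; have := tau_le Hf'; rewrite ej ltnn; done.
case: (tau_inv Hg) => [E | [i' [f' [Hf' E]]]].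
  have /= ej := f_equal (@projT1 _ _) E.
  exfalso; have := tau_le Hf; rewrite -ej ltnn; done.
have /= ej := f_equal (@projT1 _ _) E.
case: ej => ei; subst i'.
by rewrite (inj_pair2_eq_dec _ PeanoNat.Nat.eq_dec _ _ _ _ E) (IH f' Hf').
Qed.

Lemma gsum_llp (M : ModelCategory) (F : GlobeFunctor M) (T : table) (S : M)
  (c : forall k : 'I_(tlen T).+1, hom (Dob F (ti k)) S) :
  cofibrant_globe F -> weakly_contractible_globe F ->
  is_globular_sum c -> forall (X Y : M) (p : hom X Y), fib p -> llp (c ord0) p.
Proof.
move=> cofF wcF [coc univ] X Y p fp u v e.
pose SX := {j : 'I_(tlen T).+1 & hom (Dob F (ti j)) X}.
pose Good (x : SX) := comp p (projT2 x) = comp v (c (projT1 x)).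
pose Cond (x y : SX) := forall kk : 'I_(tlen T),
  projT1 x = widen_ord (leqnSn _) kk -> projT1 y = lift ord0 kk ->
  forall (s : hom (Dob F (ti' kk)) (Dob F (ti (projT1 x))))
         (t : hom (Dob F (ti' kk)) (Dob F (ti (projT1 y)))),
  is_sigma M F _ _ s -> is_tau M F _ _ t -> comp (projT2 x) s = comp (projT2 y) t.
pose x0 : SX := existT _ ord0 u.
pose dd := fix dd (k : nat) : SX := match k with
  | 0 => x0
  | k'.+1 => epsilon (inhabits x0)
      (fun y => Good y /\ projT1 y = inord k'.+1 /\ Cond (dd k') y) end.
have step : forall k, k < tlen T -> Good (dd k) -> projT1 (dd k) = inord k ->
    Good (dd k.+1) /\ projT1 (dd k.+1) = inord k.+1 /\ Cond (dd k) (dd k.+1).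
  move=> k lt G1 P1.
  suff [y Hy] : exists y, Good y /\ projT1 y = inord k.+1 /\ Cond (dd k) y.
    exact: (epsilon_spec (inhabits x0) (fun y => Good y /\ projT1 y = inord k.+1 /\ Cond (dd k) y) (ex_intro _ y Hy)).
  pose kk : 'I_(tlen T) := Ordinal lt.
  move: G1 P1; case E: (dd k) => [j h] /= G1 P1.
  have ej : widen_ord (leqnSn _) kk = j.
    by apply: val_inj; rewrite /= P1 inordK //; apply: ltnW.
  clear P1 E; subst j.
  have [s Hs] := sig_ex F (ltnW (tab_left kk)).
  have [t Ht] := tau_ex F (ltnW (tab_right kk)).
  have sq : comp p (comp h s) = comp (comp v (c (lift ord0 kk))) t.
    have G1' : comp p h = comp v (c (widen_ord (leqnSn _) kk)) := G1.
    rewrite comp_assoc G1' -comp_assoc (coc kk s t Hs Ht) comp_assoc //.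
  have [l [l1 l2]] := tau_llp cofF wcF Ht fp sq.
  exists (existT _ (lift ord0 kk) l); split; first exact: l2.
  split; first by change (lift ord0 kk = inord k.+1); apply: ord_inj; rewrite lift0 inordK.
  move=> kk' /= e1 _ s' t' Hs' Ht'.
  have ekk : kk' = kk by apply: val_inj; move/(congr1 val): e1 => /= ->.
  subst kk'.
  by rewrite (sig_uniq Hs' Hs) (tau_uniq Ht' Ht) l1.
have inv : forall k, k <= tlen T -> Good (dd k) /\ projT1 (dd k) = inord k.
  elim=> [_|k IH lt].
    split; first exact: e.
    by apply: val_inj; rewrite /= inordK.
  have [G1 P1] := IH (ltnW lt).
  by have [? [? _]] := step k lt G1 P1.
have fam : forall o : 'I_(tlen T).+1, exists h, existT _ o h = dd o.
  move=> o. have [_] := inv o (leq_ord o).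
  case: (dd o) => [j h] /= P1.
  have ej : j = o by rewrite P1 inord_val.
  clear P1; subst j. by exists h.
pose d := fun o => proj1_sig (constructive_indefinite_description _ (fam o)).
have Hd : forall o, existT _ o (d o) = dd o.
  move=> o; exact: (proj2_sig (constructive_indefinite_description _ (fam o))).
have dcoc : zigzag_cocone d.
  move=> kk s t Hs Ht.
  have [G1 P1] := inv kk (ltnW (ltn_ord kk)).
  have [_ [_ C1]] := step kk (ltn_ord kk) G1 P1.
  have E1 := Hd (widen_ord (leqnSn _) kk).
  have E2 := Hd (lift ord0 kk).
  rewrite /= in E1. rewrite lift0 in E2.
  rewrite -E1 -E2 in C1.
  exact: (C1 kk erefl erefl s t Hs Ht).
have d0 : d ord0 = u.
  have E := Hd ord0.
  exact: (inj_pair2_eq_dec _ (@eq_comparable _) _ _ _ _ E).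
have dG : forall o, comp p (d o) = comp v (c o).
  move=> o. have [G1 _] := inv o (leq_ord o).
  by rewrite -Hd in G1.
have [hS [hc _]] := univ X d dcoc.
exists hS; split; first by rewrite hc d0.
have vcoc : zigzag_cocone (fun k => comp v (c k)).
  move=> kk s t Hs Ht /=. by rewrite -!comp_assoc (coc kk s t Hs Ht).
have [w [_ wu]] := univ Y _ vcoc.
rewrite (wu (comp p hS)); first by symmetry; apply: wu.
by move=> k; rewrite -comp_assoc hc dG.
Qed.

Theorem proposition5 (M : ModelCategory) (F : GlobeFunctor M) :
  all_objects_fibrant M ->
  cofibrant_globe F ->
  weakly_contractible_globe F ->
  contractible_ext F.
Proof.
move=> fibA cofF wcF n S f g [par [T [c [gs _]]]].
have [[T0 HT0] _] := mc_lim M.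
have [tS _] := HT0 S.
have ftS : fib tS := fibA _ _ HT0 tS.
have wtS : weq tS.
  have [_ wc0] := llp_acof (gsum_llp cofF wcF gs).
  apply: (@mc_2of3_right M _ _ _ (c ord0) tS) wc0.
  exact: wcF HT0 _.
have [Y [i [Hb Hp]]] := boundary_ex F n.
have [P [u1 [u2 [j [po [j1 j2]]]]]] := boundary_step Hp.
have cj : cof j := cofF _ _ _ (@boundaryS M F n Y i P u1 u2 j Hb po j1 j2).
have [_ up] := po.
have [k [[k1 k2] _]] := up S g f (esym (Hp _ _ _ par)).
have [tD _] := HT0 (Dob F n.+1).
have sq : comp tS k = comp tD j.
  have [z Hz] := HT0 P. by rewrite (Hz (comp tS k)) (Hz (comp tD j)).
have [h [hj _]] := mc_lift_acyclic_fib cj ftS wtS sq.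
exists h; split.
  by rewrite -j2 comp_assoc hj k2.
by rewrite -j1 comp_assoc hj k1.
Qed.
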